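(* Let $\alpha: I\to M$ be a unit-speed curve on an oriented surface $M\subset E^3$ with Darboux frame $\{T,V,U\}$ and curvatures $k_g,k_n,\tau_g$. Consider the curve $\gamma$ defined in either of the following two cases: (a) $\tau_g\equiv0$, $k_n$ and $k_g$ nowhere zero, and $\gamma(s)=\alpha(s)+\frac{1}{k_g(s)}V(s)$; (b) $\tau_g$ nowhere zero, $\omega$ an antiderivative of $k_nk_g/\tau_g$, $\Omega$ an antiderivative of $e^{\omega}$, $c_8$ a real constant, $y_1=e^{-\omega}(c_8-\Omega)$, $y_2=-\frac{k_n}{\tau_g}y_1$, and $\gamma(s)=\alpha(s)+y_1(s)T(s)+y_2(s)V(s)$. In either case assume $\gamma$ is regular. Then $\gamma$ is a general helix if and only if $\alpha$ is a relatively normal-slant helix on $M$.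
   Context: $M$ is an oriented surface in Euclidean 3-space $E^3$ and $\alpha:I\to M$ is a unit-speed curve with arc-length parameter $s$. Its Darboux frame $\{T,V,U\}$ consists of the unit tangent $T=\alpha'$, the unit surface normal $U$ of $M$ along $\alpha$, and $V=U\times T$; it satisfies $T'=k_gV+k_nU$, $V'=-k_gT+\tau_gU$, $U'=-k_nT-\tau_gV$, where $k_g,k_n,\tau_g$ are the geodesic curvature, normal curvature and geodesic torsion. A regular curve is a general helix if its unit tangent makes a constant angle with a fixed direction. $\alpha$ is a relatively normal-slant helix if $\langle V,d\rangle$ is constant for some fixed unit vector $d$. *)

(* Defs.v *)
From HB Require Import structures.
From mathcomp Require Import all_boot all_order all_algebra.
From mathcomp Require Import all_classical all_reals all_analysis.
Set Implicit Arguments. Unset Strict Implicit. Unset Printing Implicit Defensive.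
Import Order.TTheory GRing.Theory Num.Theory.
Import numFieldNormedType.Exports.
Local Open Scope classical_set_scope.
Local Open Scope ring_scope.

Section E3.
Variable R : realType.

Definition dot3 (u v : 'rV[R]_3) : R := \sum_(i < 3) u 0 i * v 0 i.

Definition len3 (u : 'rV[R]_3) : R := Num.sqrt (dot3 u u).

Definition cross3 (u v : 'rV[R]_3) : 'rV[R]_3 :=
  \row_(k < 3)
    (if k == 0 :> nat then u 0 1 * v 0 2%:R - u 0 2%:R * v 0 1
     else if k == 1 :> nat then u 0 2%:R * v 0 0 - u 0 0 * v 0 2%:R
     else u 0 0 * v 0 1 - u 0 1 * v 0 0).

Definition darboux_frame (I : set R) (alpha T V U : R -> 'rV[R]_3)
  (kg kn tg : R -> R) : Prop :=
  forall s, I s ->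
    [/\ is_derive s 1 alpha (T s),
        dot3 (T s) (T s) = 1,
        dot3 (U s) (U s) = 1,
        dot3 (T s) (U s) = 0 &
        V s = cross3 (U s) (T s)] /\
    [/\ is_derive s 1 T (kg s *: V s + kn s *: U s),
        is_derive s 1 V (- kg s *: T s + tg s *: U s) &
        is_derive s 1 U (- kn s *: T s - tg s *: V s)].

Definition regular_on (I : set R) (gamma : R -> 'rV[R]_3) : Prop :=
  forall s, I s -> derivable gamma s 1 /\ 'D_1 gamma s != 0.

Definition general_helix (I : set R) (gamma : R -> 'rV[R]_3) : Prop :=
  exists (d : 'rV[R]_3) (c : R), dot3 d d = 1 /\
    forall s, I s -> dot3 ((len3 ('D_1 gamma s))^-1 *: 'D_1 gamma s) d = c.

Definition rel_normal_slant_helix (I : set R) (V : R -> 'rV[R]_3) : Prop :=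
  exists (d : 'rV[R]_3) (c : R), dot3 d d = 1 /\
    forall s, I s -> dot3 (V s) d = c.

End E3.

(* Main.v *)
Require Import Defs.
From HB Require Import structures.
From mathcomp Require Import all_boot all_order all_algebra.
From mathcomp Require Import all_classical all_reals all_analysis.
From mathcomp Require Import ring lra.
Import Order.TTheory GRing.Theory Num.Theory.
Import numFieldNormedType.Exports.
Local Open Scope classical_set_scope.
Local Open Scope ring_scope.

Section H.
Context {R : realType}.

Lemma is_derive_rowP (F : R -> 'rV[R]_3) (F' : 'rV[R]_3) (s : R) :
  is_derive s 1 F F' <-> forall i, is_derive s 1 (fun t => F t 0 i) (F' 0 i).
Proof.
split.
- move=> dF i.
  have dF1 : derivable F s 1 by case: dF.
  have di := (derivable_mxP F s 1).1 dF1 0 i.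
  apply: DeriveDef => //.
  by rewrite -(@derive_val _ _ _ _ _ _ _ dF) derive_mx // mxE.
- move=> H.
  have dF1 : derivable F s 1.
    apply/derivable_mxP => i j; rewrite (ord1 i); by case: (H j).
  apply: DeriveDef => //.
  rewrite derive_mx //; apply/matrixP => i j; rewrite mxE (ord1 i).
  by have [_ ->] := H j.
Qed.

Lemma dot3E (u v : 'rV[R]_3) :
  dot3 u v = u 0 0 * v 0 0 + u 0 1 * v 0 1 + u 0 2%:R * v 0 2%:R.
Proof.
rewrite /dot3 !big_ord_recr big_ord0 /= add0r.
by congr (_ * _ + _ * _ + _ * _); congr (_ _ _); apply/val_inj.
Qed.

Lemma is_derive_scalef (a : R -> R) (F : R -> 'rV[R]_3) (s : R) da dF :
  is_derive s 1 a da -> is_derive s 1 F dF ->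
  is_derive s 1 (fun t => a t *: F t) (a s *: dF + da *: F s).
Proof.
move=> Ha HF; apply/is_derive_rowP => i.
have Hi := (is_derive_rowP F dF s).1 HF i.
rewrite (_ : (fun t => (a t *: F t) 0 i) = a * (fun t => F t 0 i)); last first.
  by apply/funext => t; rewrite mxE.
apply: is_derive_eq (is_deriveM Ha Hi) _.
rewrite !mxE /GRing.scale /=; ring.
Qed.

Lemma is_derive_dot (F : R -> 'rV[R]_3) d (s : R) dF :
  is_derive s 1 F dF -> is_derive s 1 (fun t => dot3 (F t) d) (dot3 dF d).
Proof.
move=> HF.
have Hi := (is_derive_rowP F dF s).1 HF.
rewrite (_ : (fun t => dot3 (F t) d) = (fun t => F t 0 0) * cst (d 0 0) +
   (fun t => F t 0 1) * cst (d 0 1) + (fun t => F t 0 2%:R) * cst (d 0 2%:R)); last first.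
  by apply/funext => t; rewrite dot3E.
apply: is_derive_eq (is_deriveD (is_deriveD (is_deriveM (Hi 0) (is_derive_cst _ _ _))
   (is_deriveM (Hi 1) (is_derive_cst _ _ _))) (is_deriveM (Hi 2%:R) (is_derive_cst _ _ _))) _.
rewrite dot3E /GRing.scale /=. ring.
Qed.


Lemma is_derive_on (I : set R) (g h : R -> 'rV[R]_3) (s : R) dh :
  open I -> I s -> (forall t, I t -> h t = g t) ->
  is_derive s 1 h dh -> is_derive s 1 g dh.
Proof.
move=> oI Is hg Hh; apply: near_eq_is_derive Hh.
have nI : nbhs s I by exact: oI.
by apply: filterS nI => t It; exact: hg.
Qed.

Lemma is_derive_onR (I : set R) (g h : R -> R) (s : R) dh :
  open I -> I s -> (forall t, I t -> h t = g t) ->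
  is_derive s 1 h dh -> is_derive s 1 g dh.
Proof.
move=> oI Is hg Hh; apply: near_eq_is_derive Hh.
have nI : nbhs s I by exact: oI.
by apply: filterS nI => t It; exact: hg.
Qed.

Lemma is_derive_uniq (g : R -> R) (s : R) a b :
  is_derive s 1 g a -> is_derive s 1 g b -> a = b.
Proof. by move=> Ha Hb; rewrite -(@derive_val _ _ _ _ _ _ _ Ha) -(@derive_val _ _ _ _ _ _ _ Hb). Qed.

Lemma deriv0_cst (I : set R) (g : R -> R) :
  is_interval I -> (forall s, I s -> is_derive s 1 g 0) ->
  forall a b, I a -> I b -> g a = g b.
Proof.
move=> iI H a b.
wlog ab : a b / a <= b.
  move=> W Ia Ib; case: (leP a b) => [/W|/ltW/W]; [exact|]. by move=> /(_ Ib Ia).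
move=> Ia Ib.
have inI x : x \in `[a, b] -> I x.
  by move=> xab; apply: (iI a b) => //; rewrite (itvP xab) andbT (itvP xab).
have H1 : forall x, x \in `]a, b[ -> is_derive x 1 g 0.
  by move=> x xab; apply: H; apply: inI; rewrite in_itv /= !ltW ?(itvP xab).
have H2 : {within `[a, b], continuous g}.
  apply: derivable_within_continuous => x xab.
  by have [] := H x (inI x xab).
have [c _ ] := MVT_segment ab H1 H2.
by rewrite mul0r => /eqP; rewrite subr_eq0 => /eqP.
Qed.

Lemma deriv_sign (I : set R) (g dg : R -> R) :
  open I -> is_interval I -> (forall s, I s -> is_derive s 1 g (dg s)) ->
  (forall s, I s -> dg s != 0) ->
  (forall s, I s -> 0 < dg s) \/ (forall s, I s -> dg s < 0).
Proof.
move=> oI iI H H0.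
have eI := (is_intervalP I).1 iI.
set J := Rhull I in eI.
have inI x : x \in J -> I x by move=> xJ; rewrite eI.
have Iin x : I x -> x \in J by move=> Ix; move: Ix; rewrite {1}eI.
have Iseg x y z : I x -> I y -> z \in `[x, y] -> I z.
  by move=> Ix Iy zxy; apply: (iI x y) => //; rewrite (itvP zxy) andbT (itvP zxy).
have ginj : {in J &, injective g}.
  move=> x y /inI Ix /inI Iy gxy.
  wlog lxy : x y Ix Iy gxy / x < y.
    move=> W; have [lxy|yx|->//] := ltgtP x y.
    - exact: W.
    - by apply/esym/W.
  exfalso.
  have H1 : forall z, z \in `]x, y[ -> derivable g z 1.
    move=> z zxy; have [] := H z (Iseg x y z Ix Iy _) => //.
    by rewrite in_itv /= !ltW ?(itvP zxy).
  have H2 : {within `[x, y], continuous g}.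
    apply: derivable_within_continuous => z zxy.
    by have [] := H z (Iseg x y z Ix Iy zxy).
  have [c cxy Hc] := Rolle lxy H1 H2 gxy.
  have Ic : I c by apply: (Iseg x y c Ix Iy); rewrite in_itv /= !ltW ?(itvP cxy).
  by move/eqP: (H0 c Ic); apply; apply: is_derive_uniq (H c Ic) Hc.
have gcont : {within [set` J], continuous g}.
  apply: derivable_within_continuous => z zJ.
  by have [] := H z (inI z zJ).
have intI : I° = I by apply/interior_id.
have dI : {in I° : set R, forall x, derivable g x 1}.
  by move=> x; rewrite inE intI => Ix; have [] := H x Ix.
have dgE x : I x -> 'D_1 g x = dg x.
  by move=> Ix; apply: is_derive_uniq (H x Ix); apply: derivableP; have [] := H x Ix.
case: (itv_continuous_inj_mono gcont ginj) => [incr|decr]; [left|right] => x Ix.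
- have hge : 0 <= 'D_1 g x.
    rewrite -derive1E; apply: (@incr_derive1_ge0 _ g I x dI); last by rewrite intI.
    by move=> u v /[!inE] Iu Iv; apply: incr; apply: Iin.
  by rewrite lt_def (H0 x Ix) -(dgE x Ix) hge.
- have hge : 'D_1 g x <= 0.
    rewrite -derive1E; apply: (@decr_derive1_le0 _ g I x dI); last by rewrite intI.
    by move=> u v /[!inE] Iu Iv; apply: decr; apply: Iin.
  by rewrite lt_def eq_sym (H0 x Ix) -(dgE x Ix) hge.
Qed.


Lemma dot3C (u v : 'rV[R]_3) : dot3 u v = dot3 v u.
Proof. by rewrite !dot3E; ring. Qed.

Lemma dot3Zl (a : R) (u v : 'rV[R]_3) : dot3 (a *: u) v = a * dot3 u v.
Proof. by rewrite !dot3E !mxE; ring. Qed.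

Lemma cross3_norm (u v : 'rV[R]_3) :
  dot3 (cross3 u v) (cross3 u v) = dot3 u u * dot3 v v - (dot3 u v) ^+ 2.
Proof. by rewrite !dot3E /cross3 !mxE /=; ring. Qed.

Lemma len3Z (a : R) (u : 'rV[R]_3) : dot3 u u = 1 -> len3 (a *: u) = `|a|.
Proof.
by move=> uu; rewrite /len3 dot3Zl dot3C dot3Zl uu mulr1 -expr2 sqrtr_sqr.
Qed.

Lemma unit_tangent (a : R) (u d : 'rV[R]_3) : dot3 u u = 1 ->
  dot3 ((len3 (a *: u))^-1 *: (a *: u)) d = (a / `|a|) * dot3 u d.
Proof.
move=> uu; rewrite len3Z // !dot3Zl mulrA; congr (_ * _); by rewrite mulrC.
Qed.

End H.
Arguments is_derive_scalef {R a F s da dF}.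
Arguments is_derive_dot {R F} d {s dF}.
Arguments is_derive_on {R I g h s dh}.
Arguments is_derive_onR {R I g h s dh}.
Arguments is_derive_uniq {R g s a b}.
Arguments deriv0_cst {R I g}.
Arguments deriv_sign {R I g dg}.

Theorem theorem3p19 (R : realType) (I : set R)
  (alpha T V U : R -> 'rV[R]_3) (kg kn tg : R -> R) (gamma : R -> 'rV[R]_3) :
  open I -> is_interval I -> I !=set0 ->
  darboux_frame I alpha T V U kg kn tg ->
  (forall s, I s -> [/\ derivable kg s 1, derivable kn s 1 & derivable tg s 1]) ->
  ( (* case (a) *)
    ((forall s, I s -> [/\ tg s = 0, kn s != 0 & kg s != 0]) /\
     (forall s, I s -> gamma s = alpha s + (kg s)^-1 *: V s))
  \/
    (* case (b) *)
    ((forall s, I s -> tg s != 0) /\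
     exists (omega Omega : R -> R) (c8 : R),
       (forall s, I s -> is_derive s 1 omega (kn s * kg s / tg s)) /\
       (forall s, I s -> is_derive s 1 Omega (expR (omega s))) /\
       (forall s, I s ->
          let y1 := expR (- omega s) * (c8 - Omega s) in
          let y2 := - (kn s / tg s) * y1 in
          gamma s = alpha s + y1 *: T s + y2 *: V s)) ) ->
  regular_on I gamma ->
  (general_helix I gamma <-> rel_normal_slant_helix I V).
Proof.
move=> oI iI [s0 Is0] DF Dk Hcase Hreg.
have [f fP] : exists f : R -> R, forall s, I s -> is_derive s 1 gamma (f s *: V s).
  case: Hcase => [[Ha Hg]|[Htg [om [Om [c8 [Hom [HOm Hg]]]]]]].
  - exists (fun s => - (kg s) ^- 2 * 'D_1 kg s) => s Is.
    have [[HA _ _ _ _] [_ HV _]] := DF s Is.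
    have [dkg _ _] := Dk s Is.
    have [tg0 _ kg0] := Ha s Is.
    have Hinv := is_deriveV kg0 (derivableP dkg).
    have Hh := is_deriveD HA (is_derive_scalef Hinv HV).
    apply: is_derive_eq (is_derive_on oI Is _ Hh) _.
      by move=> t It; rewrite Hg.
    rewrite tg0; apply/rowP => i; rewrite !mxE /GRing.scale /=.
    by field.
  - pose y1 := fun t => expR (- om t) * (c8 - Om t).
    pose y2 := fun t => - (kn t / tg t) * y1 t.
    exists (fun s => kg s * y1 s + 'D_1 y2 s) => s Is.
    have [[HA _ _ _ _] [HT HV _]] := DF s Is.
    have [dkg dkn dtg] := Dk s Is.
    have tg0 := Htg s Is.
    have Hexp : is_derive s 1 (fun t => expR (- om t)) (expR (- om s) * - (kn s * kg s / tg s)).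
      exact: (is_derive1_comp (is_derive_expR _) (is_deriveN (Hom s Is))).
    have Hc : is_derive s 1 (fun t => c8 - Om t) (0 - expR (om s)).
      exact: (is_deriveB (is_derive_cst c8 s 1) (HOm s Is)).
    have Hy1 : is_derive s 1 y1 _ := is_deriveM Hexp Hc.
    have dy2 : derivable y2 s 1.
      apply: (@derivableM _ _ (fun t => - (kn t / tg t)) y1).
        apply: derivableN; apply: derivableM => //; exact: derivableV.
      by case: Hy1.
    have Hy2 := derivableP dy2.
    have Hh := is_deriveD (is_deriveD HA (is_derive_scalef Hy1 HT)) (is_derive_scalef Hy2 HV).
    apply: is_derive_eq (is_derive_on oI Is _ Hh) _.
      by move=> t It; rewrite Hg.
    set D := 'D_1 y2 s.
    apply/rowP => i; rewrite !mxE /GRing.scale /= /y2 /y1 /= expRN.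
    have e0 : expR (om s) != 0 by rewrite expR_eq0.
    by field; rewrite e0 tg0.
have fn0 : forall s, I s -> f s != 0.
  move=> s Is; have [_ Dg] := Hreg s Is.
  rewrite (@derive_val _ _ _ _ _ _ _ (fP s Is)) in Dg.
  by apply: contraNneq Dg => ->; rewrite scale0r.
have VV : forall s, I s -> dot3 (V s) (V s) = 1.
  move=> s Is; have [[_ TT UU TU VE] _] := DF s Is.
  by rewrite VE cross3_norm UU TT (dot3C (U s)) TU expr2 mulr0 subr0 mulr1.
have UT : forall s d, I s ->
    dot3 ((len3 ('D_1 gamma s))^-1 *: 'D_1 gamma s) d = (f s / `|f s|) * dot3 (V s) d.
  by move=> s d Is; rewrite (@derive_val _ _ _ _ _ _ _ (fP s Is)) unit_tangent // VV.
have sg1 : forall s, I s -> (f s / `|f s|) ^+ 2 = 1.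
  by move=> s Is; rewrite expr_div_n real_normK ?num_real // divff // expf_neq0 // fn0.
rewrite /general_helix /rel_normal_slant_helix; split.
- move=> [d [c [dd Hc]]]; exists d.
  have Hphi : forall s, I s -> (f s / `|f s|) * dot3 (V s) d = c.
    by move=> s Is; rewrite -UT // Hc.
  have [c0|c0] := eqVneq c 0.
    exists 0; split=> // s Is; have := Hphi s Is; rewrite c0; move/eqP.
    by rewrite mulf_eq0 mulf_eq0 invr_eq0 normr_eq0 orbb (negbTE (fn0 s Is)) /= => /eqP.
  exists (dot3 (V s0) d); split=> // s Is.
  pose phi := fun t => dot3 (V t) d.
  apply: (deriv0_cst (g := phi) iI _ s s0 Is Is0) => {}s {}Is.
  have [_ [_ HV _]] := DF s Is.
  have Hp := is_derive_dot d HV.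
  have Hsq1 := is_deriveM Hp Hp.
  have Hsq2 : is_derive s 1 (phi * phi) 0.
    apply: (is_derive_onR (h := cst (c ^+ 2)) oI Is _ (is_derive_cst _ _ _)).
    by move=> t It; rewrite /= -(Hphi t It) exprMn sg1 // mul1r expr2.
  have := is_derive_uniq Hsq1 Hsq2.
  set p := dot3 (- kg s *: T s + tg s *: U s) d.
  rewrite /GRing.scale /= -mulr2n => /eqP; rewrite mulrn_eq0 /= mulf_eq0 => /orP[/eqP ph0|/eqP p0]; last exact: is_derive_eq Hp p0.
  by move: c0; rewrite -(Hphi s Is) /phi ph0 mulr0 eqxx.
- move=> [d [c [dd Hc]]]; exists d.
  have [c0|c0] := eqVneq c 0.
    by exists 0; split => // s Is; rewrite UT // Hc // c0 mulr0.
  have HG : forall s, I s -> is_derive s 1 (fun t => dot3 (gamma t) d) (f s * c).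
    move=> s Is; apply: is_derive_eq (is_derive_dot d (fP s Is)) _.
    by rewrite dot3Zl Hc.
  have Hn : forall s, I s -> f s * c != 0 by move=> s Is; rewrite mulf_neq0 // fn0.
  have fa0 s : I s -> `|f s| != 0 by move=> Is; rewrite normr_eq0 fn0.
  case: (deriv_sign oI iI HG Hn) => Hs; [exists `|c| | exists (- `|c|)];
    split=> // s Is; rewrite UT // Hc // mulrAC.
  + rewrite -[f s * c]gtr0_norm ?Hs // normrM mulrAC divff ?mul1r //.
    exact: fa0.
  + have e : f s * c = - `|f s * c| by rewrite ltr0_norm ?Hs // opprK.
    rewrite e normrM mulNr mulrAC divff ?mul1r //.
    exact: fa0.
Qed.
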